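(* Let $k$ be a positive integer and let $G$ be a $3$-graph with $\lambda(G)>\lambda(K_{k+1}^3)$, and let $\vec x$ be an optimal weight vector of $G$. Then for every $v\in V(G)$, its weight satisfies $x_v<1-\frac{\sqrt{k(k-1)}}{k+1}$.
   Context: For a $3$-graph $G$ on vertex set $[n]$ and $\vec x\in\Delta=\{\vec x\in[0,1]^n:\sum_i x_i=1\}$, put $\lambda(G,\vec x)=\sum_{e\in E(G)}\prod_{i\in e}x_i$ and $\lambda(G)=\max_{\vec x\in\Delta}\lambda(G,\vec x)$ (the Lagrangian). A vector $\vec x\in\Delta$ with $\lambda(G,\vec x)=\lambda(G)$ is an optimal weight vector, and $x_v$ is the weight of vertex $v$. $K_m^3$ is the complete $3$-graph on $m$ vertices. *)

(* Defs.v *)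
From HB Require Import structures.
From mathcomp Require Import all_boot all_order all_algebra.
From mathcomp Require Import classical_sets reals.
Unset Printing Implicit Defensive.
Import Order.TTheory GRing.Theory Num.Theory.
Local Open Scope ring_scope.
Local Open Scope classical_set_scope.

Definition is_3graph (n : nat) (G : {set {set 'I_n}}) : Prop :=
  forall e, e \in G -> #|e| = 3%N.

Definition simplex (R : realType) (n : nat) : set ('I_n -> R) :=
  [set x | (forall i, 0 <= x i <= 1) /\ \sum_(i < n) x i = 1].

Definition lagr_at (R : realType) (n : nat) (G : {set {set 'I_n}}) (x : 'I_n -> R) : R :=
  \sum_(e in G) \prod_(i in e) x i.

(* lambda(G) = max over the simplex, written as the supremum (attained by compactness). *)
Definition lagrangian (R : realType) (n : nat) (G : {set {set 'I_n}}) : R :=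
  sup [set lagr_at R n G x | x in simplex R n].

Definition K3 (m : nat) : {set {set 'I_m}} := [set e : {set 'I_m} | #|e| == 3%N].

Definition optimal_weight (R : realType) (n : nat) (G : {set {set 'I_n}}) (x : 'I_n -> R) : Prop :=
  simplex R n x /\ lagr_at R n G x = lagrangian R n G.

(* Main.v *)
Require Import Defs.
From HB Require Import structures.
From mathcomp Require Import all_boot all_order all_algebra.
From mathcomp Require Import classical_sets reals.
From mathcomp Require Import ring lra zify.
Import Order.TTheory GRing.Theory Num.Theory.
Local Open Scope ring_scope.

Definition Bf {R : realType} {n} (G : {set {set 'I_n}}) (v : 'I_n) (y : 'I_n -> R) : R :=
  \sum_(e in G | v \in e) \prod_(i in e :\ v) y i.
Definition Af {R : realType} {n} (G : {set {set 'I_n}}) (v : 'I_n) (y : 'I_n -> R) : R :=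
  \sum_(e in G | v \notin e) \prod_(i in e) y i.

Lemma decomp (R : realType) n (G : {set {set 'I_n}}) (v : 'I_n) (y : 'I_n -> R) :
  lagr_at R n G y = y v * Bf G v y + Af G v y.
Proof.
rewrite /lagr_at (bigID (fun e : {set 'I_n} => v \in e)) /=; congr (_ + _).
rewrite /Bf big_distrr; apply: eq_bigr => e /andP[_ ve].
rewrite (bigD1 v) //=; congr (_ * _); apply: eq_bigl => i.
by rewrite in_setD1 andbC.
Qed.

Lemma scaleB (R : realType) n (G : {set {set 'I_n}}) (v : 'I_n) (x y : 'I_n -> R) c :
  is_3graph n G -> (forall i, i != v -> y i = c * x i) ->
  Bf G v y = c ^+ 2 * Bf G v x.
Proof.
move=> G3 hy; rewrite /Bf big_distrr; apply: eq_bigr => e /andP[eG ve].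
rewrite (eq_bigr (fun i => c * x i)); last first.
  by move=> i; rewrite in_setD1 => /andP[iv _]; apply: hy.
rewrite prodrMl; congr (_ ^+ _ * _).
by have := cardsD1 v e; rewrite ve G3 //; case.
Qed.

Lemma scaleA (R : realType) n (G : {set {set 'I_n}}) (v : 'I_n) (x y : 'I_n -> R) c :
  is_3graph n G -> (forall i, i != v -> y i = c * x i) ->
  Af G v y = c ^+ 3 * Af G v x.
Proof.
move=> G3 hy; rewrite /Af big_distrr; apply: eq_bigr => e /andP[eG ve].
rewrite (eq_bigr (fun i => c * x i)); last first.
  by move=> i ie; apply: hy; apply: contraNneq ve => <-.
by rewrite prodrMl G3.
Qed.

Lemma perturb (R : realType) (B A u : R) : 0 <= B -> 0 <= u -> u < 1 ->
  (forall c, 1 <= c -> c * u <= 1 -> (1 - c * u) * c ^+ 2 * B + c ^+ 3 * A <= (1 - u) * B + A) ->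
  3 * ((1 - u) * B + A) <= B.
Proof.
move=> B0 u0 u1 H; rewrite leNgt; apply/negP => HD.
set D := 3 * ((1 - u) * B + A) - B.
have D0 : 0 < D by rewrite /D; lra.
set w := A - u * B.
have w0 : 0 <= `|w| by [].
have wl : - `|w| <= w by have := ler_norm (- w); rewrite normrN => ?; lra.
have wr : w <= `|w| by apply: ler_norm.
set h := Num.min 1 (Num.min (1 - u) (D / (8 * (`|w| + 1)))).
have Mp : 0 < 8 * (`|w| + 1) by lra.
have h1 : h <= 1 by rewrite /h ge_min lexx.
have h2 : h <= 1 - u by rewrite /h ge_min ge_min lexx orbT.
have h3 : h <= D / (8 * (`|w| + 1)) by rewrite /h ge_min ge_min lexx !orbT.
have h0 : 0 < h.
  rewrite /h lt_min lt_min divr_gt0 //; apply/andP; split; lra.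
have h4 : h * (8 * (`|w| + 1)) <= D by rewrite -ler_pdivlMr.
have := H (1 + h); rewrite !exprS expr0 !mulr1.
have hu : h * u <= 1 - u by nra.
move=> /(_ ltac:(lra) ltac:(lra)).
have E : 0 < D + h * (B + w * (3 + h)).
  have : - (4 * `|w|) <= w * (3 + h) by nra.
  nra.
rewrite /D /w in E.
nra.
Qed.
Lemma boundB (R : realType) n (G : {set {set 'I_n}}) (v : 'I_n) (x : 'I_n -> R) :
  is_3graph n G -> (forall i, 0 <= x i) ->
  2 * Bf G v x <= (\sum_(i | i != v) x i) ^+ 2.
Proof.
move=> G3 x0.
pose Pp := fun p : 'I_n * 'I_n => [&& p.1 != v, p.2 != v & p.1 != p.2].
pose F := fun p : 'I_n * 'I_n => x p.1 * x p.2.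
have step2 : \sum_(p | Pp p) F p <= (\sum_(i | i != v) x i) ^+ 2.
  rewrite expr2 big_distrl /=.
  rewrite (eq_bigr (fun i => \sum_(j | j != v) x i * x j)); last first.
    by move=> i _; rewrite big_distrr.
  rewrite pair_big_dep /=.
  rewrite [X in _ <= X](bigID (fun p : 'I_n * 'I_n => p.1 != p.2)) /=.
  rewrite -[X in X <= _]addr0; apply: lerD.
    rewrite le_eqVlt; apply/orP; left; apply/eqP; apply: eq_bigl => p.
    by rewrite /Pp andbA.
  by apply: sumr_ge0 => p _; rewrite mulr_ge0.
apply: le_trans step2.
pose f := fun p : 'I_n * 'I_n => [set v; p.1; p.2].
rewrite (partition_big f predT) //=.
rewrite (bigID (fun S : {set 'I_n} => (S \in G) && (v \in S))) /=.
rewrite -[X in X <= _]addr0; apply: lerD; last first.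
  by apply: sumr_ge0 => S _; apply: sumr_ge0 => p _; rewrite mulr_ge0.
rewrite /Bf mulr_sumr; apply: ler_sum => S SG.
have {}SG : (S \in G) && (v \in S) by [].
case/andP: SG => SG vS.
have c2 : #|S :\ v| == 2%N.
  have h := cardsD1 v S; rewrite vS (G3 S SG) add1n in h.
  by rewrite -eqSS -h.
case/cards2P: c2 => a [b [ab Sab]].
have av : a != v.
  have : a \in S :\ v by rewrite Sab !inE eqxx.
  by rewrite in_setD1 => /andP[].
have bv : b != v.
  have : b \in S :\ v by rewrite Sab !inE eqxx orbT.
  by rewrite in_setD1 => /andP[].
have fS : forall p, p = (a, b) \/ p = (b, a) -> Pp p && (f p == S).
  move=> p hp; have {}Sv : S = v |: [set a; b] by rewrite -Sab finset.setD1K.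
  case: hp => ->; rewrite /Pp /f /= av bv ?ab ?(eq_sym b a) ?ab Sv /=;
  by apply/eqP/setP => z; rewrite !inE; case: (z == v); case: (z == a); case: (z == b).
rewrite Sab big_setU1 ?inE //= big_set1.
rewrite (bigD1 (a, b)) /=; last by apply: fS; left.
rewrite (bigD1 (b, a)) /=; last first.
  rewrite fS /=; last by right.
  by rewrite xpair_eqE negb_and eq_sym ab.
rewrite addrA /F /= -[X in X <= _]addr0; apply: lerD.
  by rewrite (mulrC (x b)); lra.
by apply: sumr_ge0 => p _; rewrite mulr_ge0.
Qed.
Lemma lagr_ub (R : realType) n (G : {set {set 'I_n}}) (y : 'I_n -> R) :
  simplex R n y -> lagr_at R n G y <= lagrangian R n G.
Proof.
move=> sy; apply: ub_le_sup; last by exists y.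
exists #|G|%:R => _ [z [z01 _] <-].
rewrite /lagr_at -sumr_const; apply: ler_sum => e _.
by apply: prodr_ile1 => i _; apply: z01.
Qed.

Lemma lagrK (R : realType) k :
  ('C(k.+1, 3))%:R / (k.+1)%:R ^+ 3 <= lagrangian R k.+1 (K3 k.+1).
Proof.
pose z := fun i : 'I_k.+1 => ((k.+1)%:R : R)^-1.
have K0 : 0 < ((k.+1)%:R : R) by rewrite ltr0n.
have -> : ('C(k.+1, 3))%:R / (k.+1)%:R ^+ 3 = lagr_at R k.+1 (K3 k.+1) z.
  rewrite /lagr_at (eq_bigr (fun _ => z ord0 ^+ 3)); last first.
    by move=> e; rewrite inE => /eqP e3; rewrite prodr_const e3.
  rewrite sumr_const /K3 card_draws card_ord /z exprVn.
  by rewrite mulr_natl.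
apply: lagr_ub; split.
  move=> i; rewrite /z invr_ge0 ltW //= invr_le1 //; last by rewrite unitfE gt_eqF.
  by rewrite ler1n.
by rewrite sumr_const card_ord /z -(mulr_natr ((k.+1)%:R^-1)) mulVf // gt_eqF.
Qed.

Lemma binom3 k : ('C(k.+1, 3) * 6 = k.+1 * (k * (k - 1)))%N.
Proof.
have := bin_ffact k.+1 3; rewrite !ffactnS ffactn0 /= => ->.
case: k => //= k; lia.
Qed.
Theorem claim3p1 (R : realType) (n k : nat) (G : {set {set 'I_n}}) (x : 'I_n -> R) :
  (0 < k)%N ->
  is_3graph n G ->
  lagrangian R k.+1 (K3 k.+1) < lagrangian R n G ->
  optimal_weight R n G x ->
  forall v : 'I_n, x v < 1 - Num.sqrt ((k * (k - 1))%:R) / (k.+1)%:R.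
Proof.
move=> k0 G3 Hlt [[x01 xsum] Hopt] v.
rewrite ltNge; apply/negP => Hge.
have x0 : forall i, 0 <= x i by move=> i; case/andP: (x01 i).
set m := ((k * (k - 1))%:R : R) in Hge.
set K1 := ((k.+1)%:R : R) in Hge.
have K0 : 0 < K1 by rewrite /K1 ltr0n.
have m0 : 0 <= m by rewrite /m ler0n.
have sq : Num.sqrt m ^+ 2 = m := sqr_sqrtr m0.
have sq0 : 0 <= Num.sqrt m := sqrtr_ge0 m.
have mlt : m < K1 ^+ 2.
  by rewrite /m /K1 expr2 -natrM ltr_nat; nia.
have sK : Num.sqrt m < K1 by nra.
set q := K1^-1.
have Kq : K1 * q = 1 by rewrite /q mulfV // gt_eqF.
have q0 : 0 < q by rewrite /q invr_gt0.
set u := \sum_(i | i != v) x i.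
have xv : x v + u = 1 by rewrite -xsum (bigD1 v).
have u0 : 0 <= u by apply: sumr_ge0.
have xiu : forall i, i != v -> x i <= u.
  by move=> i iv; rewrite /u (bigD1 i) //= lerDl sumr_ge0.
have us : u <= Num.sqrt m * q by move: Hge; rewrite -/q; lra.
have sq1 : Num.sqrt m * q < 1 by nra.
have u1 : u < 1 by lra.
have u2 : u ^+ 2 <= m * q ^+ 2 by nra.
have B0 : 0 <= Bf G v x.
  by apply: sumr_ge0 => e _; apply: prodr_ge0.
have lamx : lagrangian R n G = (1 - u) * Bf G v x + Af G v x.
  by rewrite -Hopt (decomp _ _ G v); congr (_ * _ + _); lra.
have H : forall c, 1 <= c -> c * u <= 1 ->
    (1 - c * u) * c ^+ 2 * Bf G v x + c ^+ 3 * Af G v x <= (1 - u) * Bf G v x + Af G v x.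
  move=> c c1 cu.
  pose y := fun i => if i == v then 1 - c * u else c * x i.
  have hy : forall i, i != v -> y i = c * x i by move=> i /negbTE; rewrite /y => ->.
  have ys : simplex R n y.
    split.
      move=> i; rewrite /y; case: eqP => iv.
        by apply/andP; split; nra.
      have := xiu i (introN eqP iv); have := x0 i.
      by move=> ? ?; apply/andP; split; nra.
    rewrite (bigD1 v) //= /y eqxx (eq_bigr (fun i => c * x i)); last first.
      by move=> i /negbTE ->.
    rewrite -mulr_sumr -/u; lra.
  have := @lagr_ub _ _ G _ ys; rewrite (decomp _ _ G v) (@scaleB _ _ _ _ _ _ _ G3 hy) (@scaleA _ _ _ _ _ _ _ G3 hy) lamx.
  by rewrite /y eqxx mulrA.
have P := @perturb _ _ _ _ B0 u0 u1 H.
have bB := @boundB _ _ _ v _ G3 x0.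
rewrite -/u in bB.
have LK := lagrK R k; rewrite -/K1 in LK.
have bin : (('C(k.+1, 3))%:R : R) * 6 = K1 * m.
  by rewrite /K1 /m -!natrM binom3.
set C := (('C(k.+1, 3))%:R : R) in LK bin.
have e1 : C / K1 ^+ 3 * 6 = m * q ^+ 2.
  rewrite -exprVn -/q mulrAC bin.
  have -> : K1 * m * q ^+ 3 = (K1 * q) * (m * q ^+ 2) by rewrite !exprS; ring.
  by rewrite Kq mul1r.
have h1 : lagrangian R n G <= C / K1 ^+ 3.
  rewrite lamx; set Z := C / K1 ^+ 3 in e1 *; set W := m * q ^+ 2 in e1 u2; set U := u ^+ 2 in u2 bB; set T := (1 - u) * Bf G v x in P *; lra.
have h2 := le_trans h1 LK.
by move: h2; rewrite leNgt Hlt.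
Qed.
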